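(* Let $k\geq2$ and let $a_1\leq a_2\leq\dots\leq a_k$ be positive integers with $\gcd(a_1,\dots,a_k)=1$, let $S=\langle a_1,\dots,a_k\rangle$, and let $\alpha\geq a_1a_2$ be an integer. Then $$n(S,\alpha)\leq a_1^{k-1}\left(\left\lfloor\frac{\alpha}{a_1}-a_2\right\rfloor+1\right)+\sum_{\lambda=0}^{a_2-1}\left(\left\lfloor a_1\cdot\frac{\lambda+\{\alpha/a_1\}}{a_2}\right\rfloor+1\right)^{k-1}.$$
   Context: $S=\langle a_1,\dots,a_k\rangle=\{\lambda_1a_1+\dots+\lambda_ka_k:\lambda_i\in\mathbb{Z}_{\geq0}\}$; $n(S,\alpha)$ is the number of elements $s\in S$ with $s\leq\alpha$; $\{t\}=t-\lfloor t\rfloor$ denotes the fractional part. *)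

(* Defs.v *)
From mathcomp Require Import all_boot all_order all_algebra.
From Stdlib Require Import ClassicalEpsilon.
Set Implicit Arguments. Unset Strict Implicit. Unset Printing Implicit Defensive.
Import Order.TTheory GRing.Theory Num.Theory.

(* The generators a_1,...,a_k are a 0, ..., a (k-1). *)
Definition in_semigroup (k : nat) (a : nat -> nat) (s : nat) : Prop :=
  exists lam : nat -> nat, s = \sum_(i < k) lam i * a i.

Definition in_semigroupb (k : nat) (a : nat -> nat) (s : nat) : bool :=
  if excluded_middle_informative (in_semigroup k a s) then true else false.

Definition nS (k : nat) (a : nat -> nat) (alpha : nat) : nat :=
  #|[set s : 'I_alpha.+1 | in_semigroupb k a s]|.

Definition fracr (t : rat) : rat := t - (Num.floor t)%:~R.

(* Main.v *)
Require Import Defs.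
From mathcomp Require Import all_boot all_order all_algebra.
Import Order.TTheory GRing.Theory Num.Theory.
From Stdlib Require Import ClassicalEpsilon.
From mathcomp Require Import zify ring lra.

Lemma card_le_pred (A L : nat) : #|[pred i : 'I_A | i <= L]| <= L.+1.
Proof.
have := @leq_card_in _ _ (fun i : 'I_A => (inord i : 'I_L.+1)) [pred i : 'I_A | i <= L].
rewrite card_ord; apply=> i j Hi Hj /(congr1 (@nat_of_ord _)).
by rewrite !inordK ?ltnS // => /val_inj.
Qed.

Section Count.
Variables (n : nat) (a : nat -> nat) (alpha : nat).
Let A := a 0. Let B := a 1.
Hypothesis Apos : 0 < A.
Hypothesis Bpos : 0 < B.
Hypothesis Bmin : forall j, j < n -> B <= a j.+1.

Definition w (v : {ffun 'I_n -> 'I_A}) := \sum_(j < n) v j * a j.+1.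

Definition Fm (m : nat) := [set v : {ffun 'I_n -> 'I_A} | m * A + w v <= alpha].

Lemma Fm_le1 m : #|Fm m| <= A ^ n.
Proof.
by rewrite -[A in A ^ _]card_ord -[n in _ ^ n]card_ord -card_ffun max_card.
Qed.

Lemma Fm_le2 m : #|Fm m| <= ((alpha - m * A) %/ B).+1 ^ n.
Proof.
set L := (alpha - m * A) %/ B.
apply: (@leq_trans #|ffun_on_mem ('I_n) (mem [pred i : 'I_A | i <= L])|).
  apply: subset_leq_card; apply/subsetP => v; rewrite inE => Hv.
  apply/ffun_onP => j; rewrite inE /L.
  rewrite leq_divRL //.
  have H1 := leq_mul (leqnn (nat_of_ord (v j))) (Bmin _ (ltn_ord j)).
apply: (leq_trans H1).
  rewrite leq_subRL; last by apply: leq_trans Hv; apply: leq_addr.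
  apply: leq_trans Hv; rewrite leq_add2l /w.
  by rewrite (bigD1 j) //= leq_addr.
rewrite card_ffun_on card_ord.
have [->|n0] := posnP n; first by rewrite !expn0.
by rewrite leq_exp2r // card_le_pred.
Qed.

Lemma Fm_empty m : alpha < m * A -> #|Fm m| = 0.
Proof.
move=> H; apply: eq_card0 => v; rewrite inE; apply/negbTE.
by rewrite -ltnNge; apply: leq_trans H (leq_addr _ _).
Qed.

Lemma nS_le : nS n.+1 a alpha <= \sum_(m < alpha.+1) #|Fm m|.
Proof.
set D := [set x : 'I_alpha.+1 * {ffun 'I_n -> 'I_A} | x.1 * A + w x.2 <= alpha].
have -> : \sum_(m < alpha.+1) #|Fm m| = #|D|.
  transitivity (\sum_(m < alpha.+1) \sum_(v | v \in Fm m) 1).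
    by apply: eq_bigr => m _; rewrite sum1_card.
  rewrite pair_big_dep -sum1_card; apply: eq_bigl => -[m v]; rewrite !inE.
  done.
rewrite /nS.
pose f := fun x : 'I_alpha.+1 * {ffun 'I_n -> 'I_A} => (inord (x.1 * A + w x.2) : 'I_alpha.+1).
apply: leq_trans (leq_imset_card f D).
apply: subset_leq_card; apply/subsetP => s; rewrite inE /in_semigroupb.
case: excluded_middle_informative => // -[lam Hs] _.
rewrite big_ord_recl /= in Hs.
set m := lam 0 + \sum_(j < n) (lam j.+1 %/ A) * a j.+1.
set v := [ffun j : 'I_n => Ordinal (ltn_pmod (lam j.+1) Apos)] : {ffun 'I_n -> 'I_A}.
have Hmv : m * A + w v = s.
  rewrite Hs /w mulnDl big_distrl /= -addnA; congr (_ + _).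
  rewrite -big_split; apply: eq_bigr => j _; rewrite ffunE /=.
  by rewrite mulnAC -mulnDl -divn_eq.
have mlt : m < alpha.+1.
  apply: leq_ltn_trans (ltn_ord s); rewrite -Hmv.
  by apply: leq_trans (leq_addr _ _); rewrite leq_pmulr.
apply/imsetP; exists (Ordinal mlt, v).
  by rewrite inE /= -ltnS; have := ltn_ord s; rewrite -Hmv.
by apply: ord_inj; rewrite inordK /= Hmv // ltn_ord.
Qed.
Hypothesis ABa : A * B <= alpha.

Lemma sum_bound : \sum_(m < alpha.+1) #|Fm m| <=
  A ^ n * (alpha %/ A - B + 1) + \sum_(l < B) ((l * A + alpha %% A) %/ B).+1 ^ n.
Proof.
set q := alpha %/ A; set r := alpha %% A.
have qB : B <= q by rewrite /q leq_divRL // mulnC.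
have qa : q <= alpha := leq_div alpha A.
have Hal : alpha = q * A + r := divn_eq alpha A.
rewrite -(big_mkord xpredT (fun m => #|Fm m|)).
rewrite (@big_cat_nat _ _ _ q.+1) //.
rewrite (@big_cat_nat _ _ _ (q - B + 1)) //=; last by lia.
have P3 : \sum_(q.+1 <= i < alpha.+1) #|Fm i| = 0.
  rewrite big_nat_cond big1 // => m /andP[/andP[H1 _] _]; apply: Fm_empty.
  have := ltn_ceil alpha Apos; have := leq_mul H1 (leqnn A); rewrite -/q; lia.
rewrite P3 addn0.
apply: leq_add.
  apply: leq_trans; first by apply: leq_sum => m _; exact: Fm_le1.
  by rewrite sum_nat_const_nat subn0 mulnC.
apply: leq_trans; first by apply: leq_sum => m _; exact: Fm_le2.
rewrite -{1}[q - B + 1]add0n big_addn.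
rewrite (_ : q.+1 - (q - B + 1) = B); last by lia.
rewrite big_nat_rev /= big_mkord; apply: eq_leq; apply: eq_bigr => i _.
have iB := ltn_ord i.
rewrite (_ : 0 + B - i.+1 + (q - B + 1) = q - i); last by lia.
have iq : i * A <= q * A by rewrite leq_mul2r (leq_trans (ltnW iB) qB) orbT.
by rewrite mulnBl {1}Hal (_ : q * A + r - (q * A - i * A) = i * A + r) //; lia.
Qed.
End Count.



Lemma floor_nat_div (n d : nat) : (0 < d)%N ->
  (Num.floor (n%:Q / d%:Q) = (Posz (n %/ d)))%R.
Proof.
move=> d0; apply: floor_def.
rewrite ler_pdivlMr ?ltr0n // ltr_pdivrMr ?ltr0n //.
rewrite -[(_ + 1)%R]PoszD -!pmulrn -!natrM ler_nat ltr_nat.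
by rewrite leq_trunc_div addn1 ltn_ceil.
Qed.

Lemma PoszX (m e : nat) : (Posz (m ^ e) = (Posz m) ^+ e)%R.
Proof. by rewrite -natz natrX natz. Qed.

Lemma PoszSum (N : nat) (F : 'I_N -> nat) :
  (Posz (\sum_(i < N) F i) = \sum_(i < N) Posz (F i))%R.
Proof. by rewrite -natz natr_sum; apply: eq_bigr => i _; rewrite natz. Qed.

Theorem mainTheorem8 (k : nat) (a : nat -> nat) (alpha : nat) :
  2 <= k ->
  (forall i, i < k -> 0 < a i) ->
  (forall i j, i <= j -> j < k -> a i <= a j) ->
  \big[gcdn/0]_(i < k) a i = 1 ->
  a 0 * a 1 <= alpha ->
  ((nS k a alpha)%:Z <=
     (a 0%N)%:Z ^+ (k.-1) *
        (Num.floor ((alpha%:Q / (a 0%N)%:Q) - (a 1%N)%:Q) + 1) +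
      \sum_(lam < a 1%N)
        (Num.floor ((a 0%N)%:Q * ((lam%:Q + fracr (alpha%:Q / (a 0%N)%:Q)) / (a 1%N)%:Q)) + 1)
          ^+ (k.-1))%R.
Proof.
case: k => [|[|n]] // _ apos amono _ hal /=.
have Apos : (0 < a 0)%N by apply: apos.
have Bpos : (0 < a 1)%N by apply: apos.
have Bmin : forall j : nat, (j < n.+1)%N -> (a 1 <= a j.+1)%N.
  by move=> j hj; apply: amono.
have H := leq_trans (nS_le n.+1 a alpha Apos) (sum_bound n.+1 a alpha Apos Bpos Bmin hal).
have qB : (a 1 <= alpha %/ a 0)%N by rewrite leq_divRL // mulnC.
have F1 : (Num.floor (alpha%:Q / (a 0)%:Q - (a 1)%:Q) = (Posz (alpha %/ a 0 - a 1)))%R.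
  rewrite floorDrz ?rpredN ?rpred_nat // floor_nat_div // floorN ?rpred_nat //.
  by rewrite intrKfloor subzn.
have F2 : forall lam : 'I_(a 1), (Num.floor ((a 0)%:Q * ((lam%:Q + fracr (alpha%:Q / (a 0)%:Q)) / (a 1)%:Q)) = ((lam * a 0 + alpha %% a 0) %/ a 1)%:Z)%R.
  move=> lam; rewrite -floor_nat_div //; congr Num.floor.
  rewrite /fracr floor_nat_div // -pmulrn {1}(divn_eq alpha (a 0)) -!pmulrn !natrD !natrM.
  have A0 : ((a 0)%:R != 0 :> rat)%R by rewrite pnatr_eq0 -lt0n.
  have B0 : ((a 1)%:R != 0 :> rat)%R by rewrite pnatr_eq0 -lt0n.
  by field; rewrite A0 B0.
rewrite F1 (eq_bigr _ (fun l _ => congr1 (fun z => (z + 1) ^+ n.+1)%R (F2 l))).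
move: H; rewrite -lez_nat => H; apply: le_trans H _.
rewrite PoszD PoszM PoszX PoszD PoszSum.
rewrite le_eqVlt; apply/orP; left; apply/eqP; congr (_ + _)%R.
by apply: eq_bigr => i _; rewrite PoszX -addn1 PoszD.
Qed.
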